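(* Let $s\in\mathbb{R}^2$ with $|s|=1$ and $m=s^\perp$. For every $N\in\mathcal{N}_s\setminus\mathcal{M}_s$ there exist $F,G\in\mathcal{M}_s$ with $\operatorname{rank}(F-G)=1$ and $\mu\in(0,1)$ such that $$N=\mu F+(1-\mu)G\qquad\text{and}\qquad|Nm|=|Fm|=|Gm|.$$
   Context: $m=s^\perp=(-s_2,s_1)$; $\mathcal{M}_s=\{F\in\mathbb{R}^{2\times2}:\det F=1,|Fs|=1\}$; $\mathcal{N}_s=\{F\in\mathbb{R}^{2\times2}:\det F=1,|Fs|\le1\}$. *)

(* Defs.v *)
From mathcomp Require Import all_boot all_order all_algebra.
From mathcomp Require Import reals.
Set Implicit Arguments. Unset Strict Implicit. Unset Printing Implicit Defensive.
Import Order.TTheory GRing.Theory Num.Theory.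
Local Open Scope ring_scope.

Definition vnorm2 {R : realType} (v : 'cV[R]_2) : R :=
  Num.sqrt (v 0 0 ^+ 2 + v 1 0 ^+ 2).

Definition sperp {R : realType} (s : 'cV[R]_2) : 'cV[R]_2 :=
  \col_(i < 2) (if i == 0 then - s 1 0 else s 0 0).

Definition Ms {R : realType} (s : 'cV[R]_2) (F : 'M[R]_2) : Prop :=
  \det F = 1 /\ vnorm2 (F *m s) = 1.

Definition Ns {R : realType} (s : 'cV[R]_2) (F : 'M[R]_2) : Prop :=
  \det F = 1 /\ vnorm2 (F *m s) <= 1.

(* Main.v *)
Require Import Defs.
From mathcomp Require Import all_boot all_order all_algebra.
From mathcomp Require Import reals.
From mathcomp Require Import ring lra.
Import Order.TTheory GRing.Theory Num.Theory.
Local Open Scope ring_scope.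

Lemma det2 (R : comNzRingType) (A : 'M[R]_2) : \det A = A 0 0 * A 1 1 - A 0 1 * A 1 0.
Proof.
rewrite (expand_det_row _ 0) !big_ord_recl big_ord0 /cofactor !det_mx11 !mxE /=.
have -> : lift (0:'I_2) 0 = 1 by apply/val_inj.
have -> : lift (1:'I_2) 0 = 0 by apply/val_inj.
rewrite /bump /= expr0 expr1 addr0 mul1r mulN1r mulrN; done.
Qed.

Lemma mulE (R : comNzRingType) (A : 'M[R]_2) (x : 'cV[R]_2) i :
  (A *m x) i 0 = A i 0 * x 0 0 + A i 1 * x 1 0.
Proof.
rewrite mxE !big_ord_recl big_ord0 addr0.
have -> : lift (ord0:'I_2) ord0 = 1 by apply/val_inj.
done.
Qed.

Theorem lemma3p3 (R : realType) (s : 'cV[R]_2) (N : 'M[R]_2) :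
  vnorm2 s = 1 ->
  Ns s N -> ~ Ms s N ->
  exists (F G : 'M[R]_2) (mu : R),
    [/\ Ms s F, Ms s G, \rank (F - G) = 1%N & 0 < mu < 1] /\
    [/\ N = mu *: F + (1 - mu) *: G,
        vnorm2 (N *m sperp s) = vnorm2 (F *m sperp s) &
        vnorm2 (F *m sperp s) = vnorm2 (G *m sperp s)].
Proof.
move=> Hs [HdN HnN] HnM.
have Hab : s 0 0 ^+ 2 + s 1 0 ^+ 2 = 1.
  have h0 : 0 <= s 0 0 ^+ 2 + s 1 0 ^+ 2 by rewrite addr_ge0 // sqr_ge0.
  by rewrite -(sqr_sqrtr h0); move: Hs; rewrite /vnorm2 => ->; rewrite expr1n.
set a := s 0 0 in Hab *; set b := s 1 0 in Hab *.
have Hu : (N *m s) 0 0 ^+ 2 + (N *m s) 1 0 ^+ 2 < 1.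
  have : vnorm2 (N *m s) < 1.
    rewrite lt_neqAle HnN andbT; apply/eqP => h; apply: HnM; by split.
  by rewrite /vnorm2 -{1}sqrtr1 ltr_sqrt.
rewrite !mulE -/a -/b in Hu.
set m := sperp s.
have m0 : m 0 0 = - b by rewrite /m /sperp mxE.
have m1 : m 1 0 = a by rewrite /m /sperp mxE.
set u0 := N 0 0 * a + N 0 1 * b.
set u1 := N 1 0 * a + N 1 1 * b.
set v0 := N 0 0 * (- b) + N 0 1 * a.
set v1 := N 1 0 * (- b) + N 1 1 * a.
rewrite det2 in HdN.
have Hcross : u0 * v1 - u1 * v0 = 1.
  rewrite -HdN -[RHS]mulr1 -Hab /u0 /u1 /v0 /v1; ring.
pose q := v0 ^+ 2 + v1 ^+ 2.
pose p := u0 * v0 + u1 * v1.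
pose c := u0 ^+ 2 + u1 ^+ 2 - 1.
have cneg : c < 0 by rewrite /c /u0 /u1; lra.
have qpos : 0 < q.
  have : (u0 ^+ 2 + u1 ^+ 2) * q >= 1.
    have -> : (u0 ^+ 2 + u1 ^+ 2) * q = (u0 * v1 - u1 * v0) ^+ 2 + p ^+ 2 by rewrite /q /p; ring.
    rewrite Hcross expr1n lerDl sqr_ge0 //.
  move=> h; have q0 : 0 <= q by rewrite /q addr_ge0 // sqr_ge0.
  rewrite lt_neqAle q0 andbT; apply/eqP => q0'; rewrite -q0' mulr0 in h; lra.
have qn0 : q != 0 by rewrite gt_eqF.
pose D := p ^+ 2 - q * c.
have Dpos : 0 < D by rewrite /D; nra.
pose r := Num.sqrt D.
have r2 : r ^+ 2 = D by rewrite /r sqr_sqrtr // ltW.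
have rpos : 0 < r by rewrite /r sqrtr_gt0.
have rn0 : r != 0 by rewrite gt_eqF.
have rp1 : p < r by rewrite /D in r2; nra.
have rp2 : - p < r by rewrite /D in r2; nra.
pose t1 := (- p - r) / q.
pose t2 := (- p + r) / q.
have qt1 : q * t1 = - p - r by rewrite /t1; field.
have qt2 : q * t2 = - p + r by rewrite /t2; field.
have root (t : R) : q * t = - p - r \/ q * t = - p + r -> q * t ^+ 2 + 2 * p * t + c = 0.
  move=> ht; have : q * (q * t ^+ 2 + 2 * p * t + c) = 0.
    have -> : q * (q * t ^+ 2 + 2 * p * t + c) = (q * t) ^+ 2 + 2 * p * (q * t) + q * c by ring.
    have e : q * c = p ^+ 2 - r ^+ 2 by rewrite r2 /D; ring.
    by rewrite e; case: ht => ->; ring.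
  by move/eqP; rewrite mulf_eq0 (negbTE qn0) /= => /eqP.
pose K := (N *m m) *m s^T.
have KE i j : K i j = (N *m m) i 0 * s j 0.
  by rewrite /K [LHS]mxE big_ord1 [s^T _ _]mxE.
have Krk : (\rank K <= 1)%N.
  exact: leq_trans (mxrankM_maxl _ _) (rank_leq_col _).
clearbody K.
have vE0 : (N *m m) 0 0 = v0 by rewrite mulE m0 m1.
have vE1 : (N *m m) 1 0 = v1 by rewrite mulE m0 m1.
pose F := N + t1 *: K.
pose G := N + t2 *: K.
have MsT (t : R) : q * t = - p - r \/ q * t = - p + r -> Ms s (N + t *: K).
  move=> ht; split.
    rewrite det2 !mxE !KE vE0 vE1 -/a -/b -HdN /v0 /v1; ring.
  rewrite /vnorm2 !mulE !mxE !KE vE0 vE1 -/a -/b.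
  have -> : (N 0 0 + t * (v0 * a)) * a + (N 0 1 + t * (v0 * b)) * b = u0 + t * v0.
    by rewrite /u0 -[t * v0]mulr1 -Hab; ring.
  have -> : (N 1 0 + t * (v1 * a)) * a + (N 1 1 + t * (v1 * b)) * b = u1 + t * v1.
    by rewrite /u1 -[t * v1]mulr1 -Hab; ring.
  have := root t ht; rewrite /q /p /c => h.
  have -> : (u0 + t * v0) ^+ 2 + (u1 + t * v1) ^+ 2 = 1.
    rewrite -[RHS]addr0 -h; ring.
  exact: sqrtr1.
have Fm (t : R) : (N + t *: K) *m m = N *m m.
  apply/matrixP => i j; rewrite (ord1 j) !mulE m0 m1 !mxE !KE -/a -/b; ring.
pose mu := (- p + r) / (2 * r).
have mut : mu * t1 + (1 - mu) * t2 = 0.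
  rewrite /mu /t1 /t2; field; by rewrite qn0 rn0.
exists F, G, mu; split; [split|split].
- by apply: MsT; left.
- by apply: MsT; right.
- have -> : F - G = (t1 - t2) *: K.
    by apply/matrixP => i j; rewrite !mxE; ring.
  have ht : t1 - t2 != 0.
    have -> : t1 - t2 = - (2 * r) / q by rewrite /t1 /t2; field.
    by rewrite mulf_eq0 invr_eq0 (negbTE qn0) orbF oppr_eq0 mulf_eq0 (negbTE rn0) orbF pnatr_eq0.
  rewrite (eqmx_scale _ ht); apply/eqP; rewrite eqn_leq; apply/andP; split.
    exact: Krk.
  rewrite lt0n mxrank_eq0; apply/eqP => K0.
  have k i j : (N *m m) i 0 * s j 0 = 0 by rewrite -KE K0 mxE.
  have := k 0 0; have := k 0 1; have := k 1 0; have := k 1 1.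
  rewrite vE0 vE1 -/a -/b => h1 h2 h3 h4.
  have e0 : v0 = 0.
    have -> : v0 = (v0 * a) * a + (v0 * b) * b by rewrite -[LHS]mulr1 -Hab; ring.
    by rewrite h3 h4 !mul0r addr0.
  have e1 : v1 = 0.
    have -> : v1 = (v1 * a) * a + (v1 * b) * b by rewrite -[LHS]mulr1 -Hab; ring.
    by rewrite h1 h2 !mul0r addr0.
  by move: qpos; rewrite /q e0 e1; lra.
- apply/andP; split; rewrite /mu.
    by rewrite divr_gt0 //; lra.
  rewrite ltr_pdivrMr; lra.
- apply/matrixP => i j; rewrite !mxE.
  transitivity (N i j + (mu * t1 + (1 - mu) * t2) * K i j); last by ring.
  by rewrite mut mul0r addr0.
- by rewrite /F Fm.
- by rewrite /F /G !Fm.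
Qed.
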